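(* Let $G$ be a finite connected graph with maximal vertex degree $d$ and diameter $D$. For any sign $\sigma$ on $G$ such that $(G,\sigma)$ satisfies $CD^{\sigma}(K,\infty)$, we have \[ (D+1)\left\lceil\frac{D+1}{2}\right\rceil\geq\frac{1}{4d(2\lambda^{\sigma}-K)}, \] where $\lambda^\sigma$ is the first (smallest) nonzero eigenvalue of $\Delta^\sigma$. If $\lambda^\sigma$ is not simple or $(G,\sigma)$ is balanced, then moreover \[ D\left\lceil\frac{D}{2}\right\rceil\geq\frac{1}{4d(2\lambda^{\sigma}-K)}. \]
   Context: $G=(V,E)$ is a finite simple connected graph with degrees $d_x$; a sign is $\sigma:E\to\{\pm1\}$, $\sigma_{xy}=\sigma(\{x,y\})$; $(G,\sigma)$ is balanced if every cycle has sign product $+1$. Signed Laplacian $\Delta^{\sigma}f(x)=\frac{1}{d_x}\sum_{y\sim x}(\sigma_{xy}f(y)-f(x))$; $\Delta$ is the case $\sigma\equiv+1$; eigenvalues: $-\Delta^\sigma f=\lambda f$, $f\neq 0$. $\Gamma^{\sigma}(f,g)=\frac12\{\Delta(fg)-g\Delta^{\sigma}f-f\Delta^{\sigma}g\}$, $\Gamma_2^{\sigma}(f,g)=\frac12\{\Delta\Gamma^{\sigma}(f,g)-\Gamma^{\sigma}(g,\Delta^{\sigma}f)-\Gamma^{\sigma}(f,\Delta^{\sigma}g)\}$. $CD^{\sigma}(K,\infty)$ means $\Gamma_2^{\sigma}(f,f)(x)\ge K\Gamma^\sigma(f,f)(x)$ for all $f:V\to\mathbb{R}$, $x\in V$. $\lceil\cdot\rceil$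 is the ceiling. *)

(* Defs.v *)
From HB Require Import structures.
From mathcomp Require Import all_boot all_order all_algebra.
From mathcomp Require Import reals.
Set Implicit Arguments. Unset Strict Implicit. Unset Printing Implicit Defensive.
Import Order.TTheory GRing.Theory Num.Theory.
Local Open Scope ring_scope.

(* A sign sigma is given as a function T -> T -> R, only its values on edges
   matter; it is required to be symmetric and {+1,-1}-valued on edges. *)

Section SignedGraph.
Variable R : realType.
Variable T : finType.
Variable e : rel T.

Definition simple_graph : Prop :=
  (forall x y, e x y = e y x) /\ (forall x, ~~ e x x).

Definition connected_graph : Prop := forall x y, connect e x y.

Definition is_sign (sigma : T -> T -> R) : Prop :=
  forall x y, e x y -> sigma x y = sigma y x /\ (sigma x y = 1 \/ sigma x y = -1).

Definition deg (x : T) : nat := #|[set y | e x y]|.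

Definition maxdeg : nat := \max_(x : T) deg x.

Fixpoint within (n : nat) (x y : T) : bool :=
  if n is n'.+1 then within n' x y || [exists z, e x z && within n' z y]
  else x == y.

(* graph distance (for a connected graph the minimum is attained below #|T|) *)
Definition dist (x y : T) : nat :=
  \big[minn/#|T|]_(n < #|T| | within n x y) (n : nat).

Definition diam : nat := \max_(x : T) \max_(y : T) dist x y.

Definition slap (sigma : T -> T -> R) (f : T -> R) (x : T) : R :=
  (deg x)%:R^-1 * \sum_(y | e x y) (sigma x y * f y - f x).

Definition lap (f : T -> R) (x : T) : R := slap (fun _ _ => 1) f x.

Definition sGamma (sigma : T -> T -> R) (f g : T -> R) (x : T) : R :=
  2^-1 * (lap (fun z => f z * g z) x - g x * slap sigma f x - f x * slap sigma g x).

Definition sGamma2 (sigma : T -> T -> R) (f g : T -> R) (x : T) : R :=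
  2^-1 * (lap (sGamma sigma f g) x
          - sGamma sigma g (slap sigma f) x - sGamma sigma f (slap sigma g) x).

Definition CD_inf (sigma : T -> T -> R) (K : R) : Prop :=
  forall (f : T -> R) (x : T), sGamma2 sigma f f x >= K * sGamma sigma f f x.

Definition is_eigenvalue (sigma : T -> T -> R) (lambda : R) : Prop :=
  exists f : T -> R, (exists x, f x != 0) /\
    forall x, - slap sigma f x = lambda * f x.

Definition first_nonzero_eigenvalue (sigma : T -> T -> R) (lambda : R) : Prop :=
  [/\ lambda != 0, is_eigenvalue sigma lambda &
      forall mu, mu != 0 -> is_eigenvalue sigma mu -> lambda <= mu].

Definition not_simple_eigenvalue (sigma : T -> T -> R) (lambda : R) : Prop :=
  exists f g : T -> R,
    (forall x, - slap sigma f x = lambda * f x) /\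
    (forall x, - slap sigma g x = lambda * g x) /\
    (forall a b : R, (forall x, a * f x + b * g x = 0) -> a = 0 /\ b = 0).

Definition cycle_sign (sigma : T -> T -> R) (c : seq T) : R :=
  \prod_(p <- zip c (rot 1 c)) sigma p.1 p.2.

Definition is_graph_cycle (c : seq T) : bool :=
  [&& (3 <= size c)%N, uniq c & cycle e c].

Definition balanced (sigma : T -> T -> R) : Prop :=
  forall c, is_graph_cycle c -> cycle_sign sigma c = 1.

End SignedGraph.

(* Main.v *)
Require Import Defs.
From HB Require Import structures.
From mathcomp Require Import all_boot all_order all_algebra.
From mathcomp Require Import reals boolp.
From mathcomp Require Import zify ring lra.
Import Order.TTheory GRing.Theory Num.Theory.
Set Implicit Arguments. Unset Strict Implicit.

Lemma within_walk (T : finType) (e : rel T) n x y : within e n x y ->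
  exists p, [/\ path e x p, last x p = y & (size p <= n)%N].
Proof.
elim: n x => [|n IH] x /=.
  by move/eqP=> ->; exists [::].
case/orP => [/IH [p [? ? ?]] | /existsP [z /andP [exz /IH [p [? ? ?]]]]].
  by exists p; split => //; apply: leqW.
by exists (z :: p); split => //=; rewrite exz.
Qed.

Lemma walk_within (T : finType) (e : rel T) x p : path e x p ->
  within e (size p) x (last x p).
Proof.
elim: p x => [|z p IH] x /=; first by rewrite eqxx.
case/andP => exz pz; apply/orP; right; apply/existsP; exists z.
by rewrite exz IH.
Qed.

Lemma bigminn_le (I : eqType) (r : seq I) (P : pred I) (F : I -> nat) N i :
  i \in r -> P i -> (\big[minn/N]_(j <- r | P j) F j <= F i)%N.
Proof.
elim: r => [|a r IH1] //.
rewrite inE big_cons => /orP [/eqP -> -> | ir Pi].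
  exact: geq_minl.
case: (P a); last exact: IH1.
exact: leq_trans (geq_minr _ _) (IH1 ir Pi).
Qed.

Lemma bigminn_eq (I : eqType) (r : seq I) (P : pred I) (F : I -> nat) N :
  (forall i, F i <= N)%N ->
  \big[minn/N]_(j <- r | P j) F j = N \/
  exists2 i, (i \in r) && P i & \big[minn/N]_(j <- r | P j) F j = F i.
Proof.
move=> FN; elim: r => [|a r IH]; first by left; rewrite big_nil.
rewrite big_cons; case Pa: (P a); last first.
  case: IH => [->|[i /andP [ir Pi] ->]]; first by left.
  by right; exists i; rewrite ?inE ?ir ?orbT ?Pi.
right; case: IH => [->|[i /andP [ir Pi] ->]].
  by exists a; rewrite ?inE ?eqxx ?Pa //; apply/minn_idPl.
case: (leqP (F a) (F i)) => h.
  by exists a; rewrite ?inE ?eqxx ?Pa //; apply/minn_idPl.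
exists i; first by rewrite inE ir orbT Pi.
by rewrite ?(minn_idPr (ltnW h)).
Qed.

Lemma dist_le (T : finType) (e : rel T) x y n :
  within e n x y -> (n < #|T|)%N -> (dist e x y <= n)%N.
Proof.
move=> w lt; rewrite /dist.
exact: (@bigminn_le _ _ (fun i : 'I_#|T| => within e i x y)
  (fun i : 'I_#|T| => nat_of_ord i) _ (Ordinal lt) (mem_index_enum _) w).
Qed.

Lemma dist_within (T : finType) (e : rel T) x y n :
  within e n x y -> (n < #|T|)%N -> within e (dist e x y) x y.
Proof.
move=> w lt.
have := dist_le w lt; rewrite /dist.
case: (@bigminn_eq _ (index_enum 'I_#|T|) (fun n : 'I_#|T| => within e n x y)
         (fun i : 'I_#|T| => nat_of_ord i) #|T| (fun i => ltnW (ltn_ord i))).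
  by move=> ->; rewrite leqNgt lt.
by move=> [i /andP [_ Pi] ->].
Qed.

Lemma shorten_uniq (T : finType) (e : rel T) x p : path e x p ->
  exists p', [/\ path e x p', last x p' = last x p, uniq (x :: p') &
                 (size p' <= size p)%N].
Proof.
move=> pp; case: (shortenP pp) => p' pp' up' sub'.
exists p'; split => //.
apply: uniq_leq_size => //.
by case/andP: up'.
Qed.

Lemma uniq_size_lt (T : finType) (x : T) p : uniq (x :: p) -> (size p < #|T|)%N.
Proof.
move=> u; have := max_card (mem (x :: p)).
by rewrite (card_uniqP u).
Qed.

Lemma dist_path (T : finType) (e : rel T) x y : connect e x y ->
  exists p, [/\ path e x p, last x p = y, uniq (x :: p) &
               (size p <= dist e x y)%N].
Proof.
case/connectP => p0 pp0 ->.
have [p1 [pp1 lp1 up1 _]] := shorten_uniq pp0.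
have w1 := walk_within pp1.
have lt1 := uniq_size_lt up1.
have := dist_within w1 lt1; rewrite lp1 => /within_walk [p2 [pp2 lp2 sp2]].
have [p3 [pp3 lp3 up3 sp3]] := shorten_uniq pp2.
exists p3; split => //; first by rewrite lp3.
exact: leq_trans sp3 sp2.
Qed.

Lemma dist_le_diam (T : finType) (e : rel T) x y : (dist e x y <= diam e)%N.
Proof.
rewrite /diam (bigD1 x) //= (bigD1 y) //= -maxnA.
exact: leq_maxl.
Qed.

Local Open Scope ring_scope.

Definition wsg (R : realType) (T : finType) (phi : T -> T -> R) (x : T) (p : seq T) : R :=
  \prod_(q <- zip (x :: p) p) phi q.1 q.2.

Lemma wsg_nil (R : realType) (T : finType) (phi : T -> T -> R) x : wsg phi x [::] = 1.
Proof. by rewrite /wsg big_nil. Qed.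

Lemma wsg_cons (R : realType) (T : finType) (phi : T -> T -> R) x y p :
  wsg phi x (y :: p) = phi x y * wsg phi y p.
Proof. by rewrite /wsg /= big_cons. Qed.

Lemma wsg_cat (R : realType) (T : finType) (phi : T -> T -> R) x p1 p2 :
  wsg phi x (p1 ++ p2) = wsg phi x p1 * wsg phi (last x p1) p2.
Proof.
elim: p1 x => [|y p1 IH] x /=; first by rewrite wsg_nil mul1r.
by rewrite !wsg_cons IH mulrA.
Qed.

Lemma wsg_rcons (R : realType) (T : finType) (phi : T -> T -> R) x p y :
  wsg phi x (rcons p y) = wsg phi x p * phi (last x p) y.
Proof. by rewrite -cats1 wsg_cat wsg_cons wsg_nil mulr1. Qed.

Lemma last_rev_belast (T : Type) (y : T) r : last (last y r) (rev (belast y r)) = y.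
Proof.
case: r => [|z r] //=.
by rewrite rev_cons last_rcons.
Qed.

Lemma wsg_rev (R : realType) (T : finType) (phi : T -> T -> R) x p :
  (forall a b, phi a b = phi b a) ->
  wsg phi (last x p) (rev (belast x p)) = wsg phi x p.
Proof.
move=> sym; elim: p x => [|y p IH] x //=.
rewrite rev_cons wsg_rcons IH last_rev_belast wsg_cons sym mulrC.
by [].
Qed.

Lemma wsg_path_eq (R : realType) (T : finType) (e : rel T) (phi psi : T -> T -> R) x p :
  path e x p -> (forall a b, e a b -> phi a b = psi a b) -> wsg phi x p = wsg psi x p.
Proof.
move=> + H; elim: p x => [|y p IH] x /=; first by rewrite !wsg_nil.
by case/andP => exy pp; rewrite !wsg_cons H // IH.
Qed.

Lemma cyc_prod (R : realType) (T : finType) (phi : T -> T -> R) y r w :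
  \prod_(q <- zip (y :: r) (rcons r w)) phi q.1 q.2 = wsg phi y r * phi (last y r) w.
Proof.
elim: r y => [|z r IH] y /=; first by rewrite big_cons big_nil wsg_nil mul1r mulr1.
by rewrite big_cons IH wsg_cons mulrA.
Qed.

Lemma wsg_sq (R : realType) (T : finType) (phi : T -> T -> R) x p :
  (forall a b, phi a b * phi a b = 1) -> wsg phi x p * wsg phi x p = 1.
Proof.
move=> H; elim: p x => [|y p IH] x; first by rewrite wsg_nil mulr1.
by rewrite wsg_cons mulrACA H IH mul1r.
Qed.

Definition sigs (R : realType) (T : finType) (e : rel T) (sigma : T -> T -> R) a b : R :=
  if e a b then sigma a b else 1.

Lemma sigs_sym (R : realType) (T : finType) (e : rel T) (sigma : T -> T -> R) :
  simple_graph e -> is_sign e sigma -> forall a b, sigs e sigma a b = sigs e sigma b a.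
Proof.
move=> [esym _] hs a b; rewrite /sigs esym.
by case eba: (e b a) => //; rewrite -esym in eba; case: (hs _ _ eba).
Qed.

Lemma sigs_sq (R : realType) (T : finType) (e : rel T) (sigma : T -> T -> R) :
  is_sign e sigma -> forall a b, sigs e sigma a b * sigs e sigma a b = 1.
Proof.
move=> hs a b; rewrite /sigs; case eab: (e a b); last by rewrite mulr1.
by case: (hs _ _ eab) => _ [->|->]; rewrite ?mulr1 ?mulrNN ?mulr1.
Qed.

Lemma not_uniq_split (T : eqType) (p : seq T) : ~~ uniq p ->
  exists p1 z p2 p3, p = p1 ++ z :: p2 ++ z :: p3.
Proof.
elim: p => [|a p IH] //=.
rewrite negb_and negbK => /orP [ap | /IH [p1 [z [p2 [p3 ->]]]]].
  exists [::], a, (take (index a p) p), (drop (index a p).+1 p) => /=.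
  by rewrite -{1}(cat_take_drop (index a p) p) (drop_nth a) ?index_mem // nth_index.
by exists (a :: p1), z, p2, p3.
Qed.

Lemma closed_walk_sign (R : realType) (T : finType) (e : rel T) (sigma : T -> T -> R) :
  simple_graph e -> is_sign e sigma -> balanced e sigma ->
  forall x p, path e x p -> last x p = x -> wsg (sigs e sigma) x p = 1.
Proof.
move=> sg hs hb x p.
have [n] := ubnP (size p); elim: n x p => [|n IH] x p //.
move=> szp pp lp.
case: (boolP (uniq p)) => up; last first.
  have [p1 [z [p2 [p3 Ep]]]] := not_uniq_split up.
  move: pp lp szp; rewrite Ep cat_path => /andP [pp1 /= /andP [e1]].
  rewrite cat_path => /andP [pp2 /= /andP [e2 pp3]].
  rewrite last_cat /= last_cat /= => lp szp.
  have -> : wsg (sigs e sigma) x (p1 ++ z :: p2 ++ z :: p3) =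
     wsg (sigs e sigma) x (p1 ++ z :: p3) * wsg (sigs e sigma) z (rcons p2 z).
    rewrite !wsg_cat !wsg_cons wsg_cat wsg_cons wsg_rcons.
    by ring.
  rewrite (IH x) ?(IH z) ?mulr1 //.
  - by move: szp; rewrite size_rcons !size_cat /= size_cat /=; lia.
  - by rewrite rcons_path pp2 e2.
  - by rewrite last_rcons.
  - by move: szp; rewrite !size_cat /= size_cat /=; lia.
  - by rewrite cat_path pp1 /= e1 pp3.
  - by rewrite last_cat /=.
case: p szp pp lp up => [|y [|z [|w r]]] szp pp lp up.
- by rewrite wsg_nil.
- by move: pp lp => /= /andP [exy _] yx; move: exy; rewrite yx (negbTE (sg.2 x)).
- move: lp => /= ->; rewrite !wsg_cons wsg_nil mulr1 (sigs_sym sg hs).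
  exact: sigs_sq.
have hc : is_graph_cycle e [:: y, z, w & r].
  by rewrite /is_graph_cycle up (cycle_path x) lp pp.
have := hb _ hc; rewrite /cycle_sign rot1_cons cyc_prod.
move: pp lp; set r' := [:: z, w & r] => /= /andP [exy pr'] lp.
rewrite lp wsg_cons (@wsg_path_eq _ _ e (sigs e sigma) sigma y r') //.
  by rewrite /sigs exy mulrC.
by move=> a b eab; rewrite /sigs eab.
Qed.

Lemma balanced_switch (R : realType) (T : finType) (e : rel T) (sigma : T -> T -> R) (x0 : T) :
  simple_graph e -> connected_graph e -> is_sign e sigma -> balanced e sigma ->
  exists tau : T -> R, (forall x, tau x * tau x = 1) /\
    (forall a b, e a b -> sigma a b = tau a * tau b).
Proof.
move=> sg hc hs hb.
have Hp : forall v, exists p, path e x0 p && (last x0 p == v).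
  move=> v; case/connectP: (hc x0 v) => p pp lp.
  by exists p; rewrite pp lp eqxx.
pose P v := xchoose (Hp v).
have PP v : path e x0 (P v) by have /andP [] := xchooseP (Hp v).
have LP v : last x0 (P v) = v by have /andP [_ /eqP] := xchooseP (Hp v).
exists (fun v => wsg (sigs e sigma) x0 (P v)); split.
  by move=> x; apply: wsg_sq; apply: sigs_sq.
move=> a b eab.
have esym : forall u v, e u v = e v u by move=> u v; rewrite sg.1.
pose q := P b.
pose W := P a ++ last x0 q :: rev (belast x0 q).
have pW : path e x0 W.
  rewrite /W cat_path PP /= LP LP eab /=.
  rewrite -{1}(LP b) rev_path.
  rewrite (@eq_path _ _ e); first exact: PP.
  by move=> u v; rewrite /= esym.
have lW : last x0 W = x0 by rewrite /W last_cat /= last_rev_belast.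
have := closed_walk_sign sg hs hb pW lW.
rewrite /W wsg_cat wsg_cons wsg_rev; last exact: sigs_sym.
rewrite LP LP /q.
have -> : sigs e sigma a b = sigma a b by rewrite /sigs eab.
set ta := wsg _ x0 (P a); set tb := wsg _ x0 (P b) => H.
have ha : ta * ta = 1 by apply: wsg_sq; apply: sigs_sq.
have hb' : tb * tb = 1 by apply: wsg_sq; apply: sigs_sq.
have -> : sigma a b = (ta * ta) * sigma a b * (tb * tb) by rewrite ha hb' mul1r mulr1.

have -> : ta * ta * sigma a b * (tb * tb) = (ta * (sigma a b * tb)) * (ta * tb) by ring.
by rewrite H mul1r.
Qed.


Lemma sign_sq (R : realType) (T : finType) (e : rel T) (sigma : T -> T -> R) x y :
  is_sign e sigma -> e x y -> sigma x y * sigma x y = 1.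
Proof.
by move=> hs exy; case: (hs _ _ exy) => _ [->|->]; rewrite ?mulr1 ?mulrNN ?mulr1.
Qed.

Lemma gamma_formula (R : realType) (T : finType) (e : rel T) (sigma : T -> T -> R) f x :
  is_sign e sigma ->
  sGamma e sigma f f x =
  2^-1 * ((deg e x)%:R^-1 * \sum_(y | e x y) (f y - sigma x y * f x) ^+ 2).
Proof.
move=> hs; rewrite /sGamma /lap /slap; congr (2^-1 * _).
rewrite !(mulrCA (f x)) -!mulrBr; congr (_ * _).
rewrite !mulr_sumr -!sumrB; apply: eq_bigr => y exy.
have s2 := sign_sq hs exy.
have -> : (f y - sigma x y * f x) ^+ 2 =
   f y * f y - 2 * sigma x y * f x * f y + (sigma x y * sigma x y) * (f x * f x) by ring.
rewrite s2; ring.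
Qed.

Lemma gamma_ge0 (R : realType) (T : finType) (e : rel T) (sigma : T -> T -> R) f x :
  is_sign e sigma -> 0 <= sGamma e sigma f f x.
Proof.
move=> hs; rewrite gamma_formula //.
apply: mulr_ge0; first by rewrite invr_ge0.
apply: mulr_ge0; first by rewrite invr_ge0.
by apply: sumr_ge0 => y _; apply: sqr_ge0.
Qed.

Lemma slap_scale (R : realType) (T : finType) (e : rel T) (sigma : T -> T -> R) f c x :
  slap e sigma (fun z => c * f z) x = c * slap e sigma f x.
Proof.
rewrite /slap mulrCA; congr (_ * _); rewrite mulr_sumr; apply: eq_bigr => y _; ring.
Qed.

Lemma lap_lin (R : realType) (T : finType) (e : rel T) (a b : T -> R) c x :
  lap e (fun z => a z + c * b z) x = lap e a x + c * lap e b x.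
Proof.
rewrite /lap /slap mulrCA -mulrDr; congr (_ * _).
rewrite mulr_sumr -big_split; apply: eq_bigr => y _ /=; ring.
Qed.

Lemma lap_max (R : realType) (T : finType) (e : rel T) (h : T -> R) x :
  (forall y, h y <= h x) -> lap e h x <= 0.
Proof.
move=> H; rewrite /lap /slap; apply: mulr_ge0_le0; first by rewrite invr_ge0.
by apply: sumr_le0 => y _; rewrite mul1r subr_le0.
Qed.

Lemma sGamma_scale (R : realType) (T : finType) (e : rel T) (sigma : T -> T -> R) f c x :
  sGamma e sigma f (fun z => c * f z) x = c * sGamma e sigma f f x.
Proof.
rewrite /sGamma slap_scale.
have -> : (fun z => f z * (c * f z)) = (fun z => 0 + c * (f z * f z)).
  by apply: funext => z; ring.
rewrite lap_lin.
have -> : lap e (fun _ : T => 0) x = 0 :> R.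
  by rewrite /lap /slap big1 ?mulr0 // => y _; rewrite subrr.
ring.
Qed.


Lemma gamma_eig (R : realType) (T : finType) (e : rel T) (sigma : T -> T -> R) f lambda x :
  (forall z, - slap e sigma f z = lambda * f z) ->
  sGamma e sigma f f x = 2^-1 * lap e (fun z => f z * f z) x + lambda * (f x * f x).
Proof.
move=> eig; rewrite /sGamma.
have -> : slap e sigma f x = - (lambda * f x) by rewrite -eig opprK.
by field.
Qed.

Lemma gamma2_eig (R : realType) (T : finType) (e : rel T) (sigma : T -> T -> R) f lambda x :
  (forall z, - slap e sigma f z = lambda * f z) ->
  sGamma2 e sigma f f x = 2^-1 * lap e (sGamma e sigma f f) x + lambda * sGamma e sigma f f x.
Proof.
move=> eig; rewrite /sGamma2.
have -> : slap e sigma f = (fun z => (- lambda) * f z).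
  by apply: funext => z; rewrite mulNr -eig opprK.
by rewrite sGamma_scale; field.
Qed.

Lemma sq_le1 (R : realType) (a : R) : `|a| <= 1 -> a * a <= 1.
Proof.
move=> h; have := ler_norm (a * a); rewrite normrM => h2.
have h0 := normr_ge0 a.
nra.
Qed.

Lemma gamma_bound (R : realType) (T : finType) (e : rel T) (sigma : T -> T -> R) K lambda f :
  is_sign e sigma -> CD_inf e sigma K ->
  (forall z, - slap e sigma f z = lambda * f z) -> 0 < lambda -> 0 < 2 * lambda - K ->
  (forall z, `|f z| <= 1) ->
  forall x, sGamma e sigma f f x <= 2 * (2 * lambda - K).
Proof.
move=> hs hcd eig lpos apos hf x.
set a := 2 * lambda - K.
pose G := sGamma e sigma f f.
pose H := fun z => G z + a * (f z * f z).
case: (@arg_maxP _ _ _ x (fun _ => true) H isT) => x1 _ Hmax.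
have L0 : lap e H x1 <= 0 by apply: lap_max => y; exact: Hmax.
rewrite /H lap_lin in L0.
have C := hcd f x1; rewrite (gamma2_eig _ eig) in C.
have E := gamma_eig x1 eig.
have q1 := sq_le1 (hf x1).
have q0 : 0 <= f x1 * f x1 by apply: sqr_ge0.
move: L0 C E; rewrite -/(G x1).
set LG := lap e G x1; set Lf := lap e (fun z => f z * f z) x1.
set g := G x1; set q := f x1 * f x1 => L0 C E.
have Lfe : Lf = 2 * g - 2 * lambda * q by rewrite E; field.
rewrite Lfe /a in L0.
have h1 : lambda * (g - a * q) <= 0.
  have -> : lambda * (g - a * q) = 2^-1 * ((LG + (2 * lambda - K) * (2 * g - 2 * lambda * q))
       + 2 * (K * g - (2^-1 * LG + lambda * g))) by rewrite /a; field.
  apply: mulr_ge0_le0; first by rewrite invr_ge0 ler0n.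
  have : K * g - (2^-1 * LG + lambda * g) <= 0 by rewrite subr_le0.
  lra.
have h2 : g - a * q <= 0 by rewrite pmulr_rle0 in h1.
have hH : H x1 <= 2 * a.
  rewrite /H -/g -/q.
  have : a * q <= a by rewrite -{2}(mulr1 a) ler_pM2l.
  lra.
have Hx : H x <= H x1 := Hmax x isT.
have : G x <= H x.
  have : 0 <= a * (f x * f x) by apply: mulr_ge0; [exact: ltW | exact: sqr_ge0].
  rewrite /H; lra.
move=> hG; change (G x <= 2 * a); lra.
Qed.


Lemma norm_sq1 (R : realType) (t : R) : t * t = 1 -> `|t| = 1.
Proof.
move=> h; have h2 : `|t| * `|t| = 1 by rewrite -normrM h normr1.
have h0 := normr_ge0 t.
apply/eqP; rewrite eq_le; apply/andP; split; nra.
Qed.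

Lemma telescope (R : realType) (T : finType) (phi : T -> T -> R) (f : T -> R) :
  (forall a b, phi a b * phi a b = 1) ->
  forall s x p, s * s = 1 ->
  s * f x - s * wsg phi x p * f (last x p) <=
  \sum_(q <- zip (x :: p) p) `|f q.2 - phi q.1 q.2 * f q.1|.
Proof.
move=> hphi s x p; elim: p s x => [|y p IH] s x hs.
  by rewrite /= big_nil wsg_nil mulr1 subrr.
rewrite /= big_cons /= wsg_cons.
have hs' : (s * phi x y) * (s * phi x y) = 1 by rewrite mulrACA hs hphi mul1r.
have := IH _ y hs'.
set W := wsg phi y p; set L := last y p.
have n1 := norm_sq1 hs'.
have h1 : - (s * phi x y) * (f y - phi x y * f x) <= `|f y - phi x y * f x|.
  apply: le_trans (ler_norm _) _.
  by rewrite mulNr normrN normrM n1 mul1r.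
have e1 : - (s * phi x y) * (f y - phi x y * f x) = s * f x - s * phi x y * f y.
  have -> : - (s * phi x y) * (f y - phi x y * f x) =
      s * (phi x y * phi x y) * f x - s * phi x y * f y by ring.
  by rewrite hphi mulr1.
rewrite e1 in h1.
move=> h2.
have -> : s * f x - s * (phi x y * W) * f L =
   (s * f x - s * phi x y * f y) + (s * phi x y * f y - s * phi x y * W * f L) by ring.
exact: lerD.
Qed.

Lemma cs_seq (R : realType) (I : Type) (l : seq I) (u : I -> R) :
  (\sum_(i <- l) u i) ^+ 2 <= (size l)%:R * \sum_(i <- l) u i ^+ 2.
Proof.
elim: l => [|a l IH]; first by rewrite !big_nil expr0n /= mul0r.
rewrite !big_cons /=.
set S := \sum_(i <- l) u i in IH *; set Q := \sum_(i <- l) u i ^+ 2 in IH *.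
set n := (size l)%:R in IH *.
have n0 : 0 <= n by rewrite /n ler0n.
have Q0 : 0 <= Q by apply: sumr_ge0 => i _; apply: sqr_ge0.
rewrite -natr1 -/n.
have h3 : 0 <= (n * u a - S) ^+ 2 by apply: sqr_ge0.
rewrite !expr2 in IH h3 *.
have [n00|npos] := eqVneq n 0.
  rewrite n00 mul0r in IH.
  have S0 : S = 0.
    have : 0 <= S * S by nra.
    move=> h; apply/eqP; rewrite -sqrf_eq0 expr2; apply/eqP; lra.
  rewrite n00 S0; nra.
have np : 0 < n by rewrite lt_def npos n0.
nra.
Qed.

Lemma deg_le_max (T : finType) (e : rel T) v : (deg e v <= maxdeg e)%N.
Proof. by rewrite /maxdeg (bigD1 v) //= leq_maxl. Qed.

Lemma deg_pos (T : finType) (e : rel T) v u : e v u -> (0 < deg e v)%N.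
Proof. by move=> evu; apply/card_gt0P; exists u; rewrite inE. Qed.

Lemma sum_eq_gamma (R : realType) (T : finType) (e : rel T) (sigma : T -> T -> R) f v u :
  is_sign e sigma -> e v u ->
  \sum_(y | e v y) (f y - sigma v y * f v) ^+ 2 = 2 * (deg e v)%:R * sGamma e sigma f f v.
Proof.
move=> hs evu; rewrite gamma_formula //.
have d0 : (deg e v)%:R != 0 :> R by rewrite pnatr_eq0 -lt0n (deg_pos evu).
by field.
Qed.

Lemma sum_le_bound (R : realType) (T : finType) (e : rel T) (sigma : T -> T -> R) f v u C :
  is_sign e sigma -> e v u -> (forall z, sGamma e sigma f f z <= C) ->
  \sum_(y | e v y) (f y - sigma v y * f v) ^+ 2 <= 2 * (maxdeg e)%:R * C.
Proof.
move=> hs evu hC; rewrite (sum_eq_gamma _ hs evu).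
have g0 := gamma_ge0 f v hs.
have gC := hC v.
have dd : (deg e v)%:R <= (maxdeg e)%:R :> R by rewrite ler_nat deg_le_max.
have d0 : 0 <= (deg e v)%:R :> R by rewrite ler0n.
nra.
Qed.

Definition stp (R : realType) (T : finType) (phi : T -> T -> R) (f : T -> R) (q : T * T) : R :=
  f q.2 - phi q.1 q.2 * f q.1.

Lemma single_bound (R : realType) (T : finType) (e : rel T) (sigma : T -> T -> R) f C u w :
  is_sign e sigma -> (forall z, sGamma e sigma f f z <= C) -> e u w ->
  stp (sigs e sigma) f (u, w) ^+ 2 <= 2 * (maxdeg e)%:R * C.
Proof.
move=> hs hC euw.
apply: (le_trans _ (sum_le_bound (f:=f) hs euw hC)).
rewrite /stp /sigs /= euw (bigD1 w) //= lerDl.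
by apply: sumr_ge0 => y _; apply: sqr_ge0.
Qed.

Lemma pair_bound (R : realType) (T : finType) (e : rel T) (sigma : T -> T -> R) f C u v w :
  simple_graph e -> is_sign e sigma -> (forall z, sGamma e sigma f f z <= C) ->
  e u v -> e v w -> u != w ->
  stp (sigs e sigma) f (u, v) ^+ 2 + stp (sigs e sigma) f (v, w) ^+ 2 <=
  2 * (maxdeg e)%:R * C.
Proof.
move=> sg hs hC euv evw uw.
have evu : e v u by rewrite sg.1.
apply: (le_trans _ (sum_le_bound (f:=f) hs evu hC)).
rewrite (bigD1 u) //= (bigD1 w) /=; last by rewrite evw eq_sym.
have r0 : 0 <= \sum_(i | e v i && (i != u) && (i != w)) (f i - sigma v i * f v) ^+ 2.
  by apply: sumr_ge0 => y _; apply: sqr_ge0.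
have k2 : stp (sigs e sigma) f (v, w) ^+ 2 = (f w - sigma v w * f v) ^+ 2.
  by rewrite /stp /sigs /= evw.
have [hsym _] := hs _ _ euv.
have s2 := sign_sq hs evu.
have k1 : stp (sigs e sigma) f (u, v) ^+ 2 = (f u - sigma v u * f v) ^+ 2.
  rewrite /stp /sigs /= euv hsym.
  have -> : f v - sigma v u * f u = - (sigma v u) * (f u - sigma v u * f v)
     + (1 - sigma v u * sigma v u) * f v by ring.
  rewrite s2 subrr mul0r addr0 exprMn sqrrN expr2 s2; ring.
rewrite k1 k2; lra.
Qed.

Lemma sumsq_path (R : realType) (T : finType) (e : rel T) (phi : T -> T -> R) f B :
  (forall u w, e u w -> stp phi f (u, w) ^+ 2 <= B) ->
  (forall u v w, e u v -> e v w -> u != w ->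
      stp phi f (u, v) ^+ 2 + stp phi f (v, w) ^+ 2 <= B) ->
  0 <= B ->
  forall x p, path e x p -> uniq (x :: p) ->
  \sum_(q <- zip (x :: p) p) stp phi f q ^+ 2 <= ((size p).+1 %/ 2)%N%:R * B.
Proof.
move=> h1 h2 B0 x p.
have [n] := ubnP (size p); elim: n x p => [|n IH] x p //.
case: p => [|v [|w r]] szp pp up.
- by rewrite /= big_nil mul0r.
- rewrite /= big_cons big_nil addr0 mul1r.
  by apply: h1; move: pp => /= /andP [].
rewrite /= !big_cons.
move: pp => /= /and3P [exv evw pr].
move: up; rewrite /= !inE !negb_or => /andP [/and3P [xv xw _] /andP [_ uwr]].
have szr : (size r < n)%N by move: szp => /=; lia.
have IHr := IH w r szr pr uwr.
have hp := h2 _ _ _ exv evw xw.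
have -> : ((size r).+3 %/ 2 = ((size r).+1 %/ 2).+1)%N.
  by rewrite -[(size r).+3]/(1 * 2 + (size r).+1) divnMDl.
rewrite -natr1 mulrDl mul1r.
lra.
Qed.

Lemma core (R : realType) (T : finType) (e : rel T) (sigma : T -> T -> R) K lambda f x0 p :
  simple_graph e -> is_sign e sigma -> CD_inf e sigma K ->
  (forall z, - slap e sigma f z = lambda * f z) -> 0 < lambda -> 0 < 2 * lambda - K ->
  f x0 = 1 -> (forall z, `|f z| <= 1) ->
  path e x0 p -> uniq (x0 :: p) -> wsg (sigs e sigma) x0 p * f (last x0 p) <= 0 ->
  1 <= (size p)%:R * ((size p).+1 %/ 2)%N%:R * (4 * (maxdeg e)%:R * (2 * lambda - K)).
Proof.
move=> sg hs hcd eig lpos apos fx0 hf pp up hneg.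
have hC := gamma_bound hs hcd eig lpos apos hf.
set C := 2 * (2 * lambda - K) in hC.
have C0 : 0 <= C by rewrite /C; apply: mulr_ge0 => //; exact: ltW.
set B := 2 * (maxdeg e)%:R * C.
have B0 : 0 <= B by rewrite /B; apply: mulr_ge0 => //; apply: mulr_ge0.
have hQ := sumsq_path (fun u w => @single_bound _ _ _ _ f C u w hs hC)
  (fun u v w => @pair_bound _ _ _ _ f C u v w sg hs hC) B0 pp up.
have hT := telescope f (sigs_sq hs) x0 p (mulr1 1).
rewrite fx0 !mul1r in hT.
set Tsum := \sum_(q <- zip (x0 :: p) p) _ in hT.
have T1 : 1 <= Tsum by lra.
have hcs := cs_seq (zip (x0 :: p) p) (fun q => `|stp (sigs e sigma) f q|).
rewrite size_zip /= (minn_idPr (leqnSn _)) in hcs.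
have E : \sum_(i <- zip (x0 :: p) p) `|stp (sigs e sigma) f i| ^+ 2 =
          \sum_(q <- zip (x0 :: p) p) stp (sigs e sigma) f q ^+ 2.
  by apply: eq_bigr => q _; rewrite real_normK // num_real.
rewrite E in hcs.
have -> : 4 * (maxdeg e)%:R * (2 * lambda - K) = B by rewrite /B /C; ring.
have m0 : 0 <= (size p)%:R :> R by rewrite ler0n.
have T2 : 1 <= Tsum ^+ 2 by rewrite expr2; nra.
apply: (le_trans T2); apply: (le_trans hcs).
rewrite -mulrA; apply: ler_wpM2l => //.
Qed.


Lemma normalize (R : realType) (T : finType) (e : rel T) (sigma : T -> T -> R) lambda h :
  (forall z, - slap e sigma h z = lambda * h z) -> (exists x, h x != 0) ->
  exists f x0, [/\ (forall z, - slap e sigma f z = lambda * f z), f x0 = 1,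
     (forall z, `|f z| <= 1) & (forall z, h z = 0 -> f z = 0)].
Proof.
move=> eig [t ht].
case: (@arg_maxP _ _ _ t (fun _ => true) (fun z => `|h z|) isT) => x0 _ Hmax.
have hx0 : h x0 != 0.
  rewrite -normr_gt0; apply: (lt_le_trans _ (Hmax t isT)); by rewrite normr_gt0.
exists (fun z => (h x0)^-1 * h z), x0; split.
- by move=> z; rewrite slap_scale -mulrN eig mulrCA.
- by rewrite mulVf.
- move=> z; rewrite normrM normfV ler_pdivrMl ?normr_gt0 // mulr1.
  exact: (Hmax z isT).
- by move=> z ->; rewrite mulr0.
Qed.

Lemma lambda_pos (R : realType) (T : finType) (e : rel T) (sigma : T -> T -> R) lambda f x0 :
  is_sign e sigma -> (forall z, - slap e sigma f z = lambda * f z) ->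
  f x0 = 1 -> (forall z, `|f z| <= 1) -> lambda != 0 ->
  0 < lambda /\ (0 < deg e x0)%N.
Proof.
move=> hs eig fx0 hf lnz.
have El : lambda = - slap e sigma f x0 by rewrite eig fx0 mulr1.
have dpos : (0 < deg e x0)%N.
  rewrite lt0n; apply/negP => /eqP d0.
  by move: lnz; rewrite El /slap d0 invr0 mul0r oppr0 eqxx.
split => //.
rewrite lt_def lnz /= El /slap -mulrN; apply: mulr_ge0; first by rewrite invr_ge0.
rewrite -sumrN; apply: sumr_ge0 => y exy.
rewrite fx0 opprB subr_ge0.
apply: le_trans (ler_norm _) _.
rewrite normrM (norm_sq1 (sign_sq hs exy)) mul1r; exact: hf.
Qed.

Lemma switch_sum (R : realType) (T : finType) (e : rel T) (sigma : T -> T -> R) lambda f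
    (tau : T -> R) :
  simple_graph e -> (forall a b, e a b -> sigma a b = tau a * tau b) ->
  (forall x, tau x * tau x = 1) ->
  (forall z, - slap e sigma f z = lambda * f z) -> lambda != 0 ->
  \sum_x (deg e x)%:R * (tau x * f x) = 0.
Proof.
move=> sg hst ht eig lnz.
pose F x := tau x * f x.
have A : forall x, (deg e x)%:R * (tau x * slap e sigma f x) =
                   \sum_(y | e x y) (F y - F x).
  move=> x; case: (posnP (deg e x)) => [d0|dpos].
    rewrite d0 mul0r big_pred0 // => y; apply/negP => exy.
    by move: (deg_pos exy); rewrite d0.
  rewrite /slap mulrCA mulVKf ?pnatr_eq0 -?lt0n // mulr_sumr.
  apply: eq_bigr => y exy; rewrite /F hst //.
  have := ht x; move=> h; rewrite mulrBr; congr (_ - _).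
  by rewrite mulrA mulrA h mul1r.
have B : \sum_x \sum_(y | e x y) (F y - F x) = 0.
  rewrite (eq_bigr (fun x => \sum_(y | e x y) F y - \sum_(y | e x y) F x)); last first.
    by move=> x _; rewrite sumrB.
  rewrite sumrB; apply/eqP; rewrite subr_eq0; apply/eqP.
  transitivity (\sum_x \sum_y (if e x y then F y else 0)).
    by apply: eq_bigr => x _; rewrite big_mkcond.
  rewrite exchange_big /=; apply: eq_bigr => y _.
  rewrite [RHS]big_mkcond; apply: eq_bigr => x _.
  by rewrite sg.1.
have C : \sum_x (deg e x)%:R * (tau x * slap e sigma f x) = 0.
  by rewrite -[RHS]B; apply: eq_bigr => x _; rewrite A.
have : \sum_x (deg e x)%:R * (tau x * slap e sigma f x) =
       - lambda * \sum_x (deg e x)%:R * (tau x * f x).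
  rewrite mulr_sumr; apply: eq_bigr => x _.
  have -> : slap e sigma f x = - (lambda * f x) by rewrite -eig opprK.
  ring.
rewrite C => /esym /eqP; rewrite mulf_eq0 oppr_eq0 (negbTE lnz) /=.
by move/eqP.
Qed.

Lemma exists_neg (R : realType) (T : finType) (w g : T -> R) x0 :
  (forall z, 0 <= w z) -> 0 < w x0 * g x0 -> \sum_z w z * g z = 0 ->
  exists z, w z * g z < 0.
Proof.
move=> w0 pos S.
case: (boolP [exists z, w z * g z < 0]) => [/existsP [z hz]|/existsPn hn].
  by exists z.
have : 0 < \sum_z w z * g z.
  rewrite (bigD1 x0) //=; apply: (lt_le_trans pos); rewrite lerDl.
  by apply: sumr_ge0 => z _; have := hn z; rewrite -leNgt.
by rewrite S ltxx.
Qed.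

Lemma wsg_tau (R : realType) (T : finType) (e : rel T) (phi : T -> T -> R) (tau : T -> R) x p :
  (forall a b, e a b -> phi a b = tau a * tau b) -> (forall x, tau x * tau x = 1) ->
  path e x p -> wsg phi x p = tau x * tau (last x p).
Proof.
move=> hst ht; elim: p x => [|y p IH] x /=; first by rewrite wsg_nil ht.
case/andP => exy pp; rewrite wsg_cons IH // hst //.
by rewrite -mulrA (mulrA (tau y)) ht mul1r.
Qed.

Lemma slap_lin2 (R : realType) (T : finType) (e : rel T) (sigma : T -> T -> R) f g a b x :
  slap e sigma (fun z => a * f z + b * g z) x = a * slap e sigma f x + b * slap e sigma g x.
Proof.
rewrite /slap mulrCA (mulrCA b) -mulrDr; congr (_ * _).
rewrite !mulr_sumr -big_split; apply: eq_bigr => y _ /=; ring.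
Qed.

Lemma last_take_nth (T : Type) (x : T) p j : (j <= size p)%N ->
  last x (take j p) = nth x (x :: p) j.
Proof.
elim: p x j => [|z p IH] x [|j] //= hj.
rewrite IH //; apply: set_nth_default => /=; exact: hj.
Qed.

Lemma final_bound (R : realType) (m M : nat) (A : R) :
  1 <= m%:R * ((m.+1 %/ 2)%N)%:R * A -> (m <= M)%N ->
  1 / A <= M%:R * (Num.ceil (M%:R / 2 : R))%:~R.
Proof.
move=> h mM.
have m0 : 0 <= m%:R :> R by rewrite ler0n.
have c0 : 0 <= ((m.+1 %/ 2)%N)%:R :> R by rewrite ler0n.
have mc0 := mulr_ge0 m0 c0.
have Apos : 0 < A.
  rewrite ltNge; apply/negP => A0.
  have : m%:R * ((m.+1 %/ 2)%N)%:R * A <= 0 by apply: mulr_ge0_le0.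
  lra.
set k := Num.ceil (M%:R / 2 : R).
have hk : M%:R / 2 <= k%:~R :> R by exact: ceil_ge.
have hk2 : (M%:Z <= 2 * k)%R.
  rewrite -(ler_int R) intrM /=.
  have -> : (2%:~R : R) = 2 by [].
  rewrite -ler_pdivrMl // mulrC.
  by rewrite -[M%:Z%:~R]/(M%:R).
have hck : (((m.+1 %/ 2)%N)%:Z <= k)%R by lia.
have hck' : ((m.+1 %/ 2)%N)%:R <= k%:~R :> R.
  by rewrite -[((m.+1 %/ 2)%N)%:R]/(((m.+1 %/ 2)%N)%:Z%:~R) ler_int.
have hmM : m%:R <= M%:R :> R by rewrite ler_nat.
rewrite div1r -(ler_pM2r Apos) mulVf ?gt_eqF //.
apply: (le_trans h); apply: ler_wpM2r; first exact: ltW.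
apply: ler_pM => //.
Qed.


Lemma lhs_ge0 (R : realType) (M : nat) : 0 <= M%:R * (Num.ceil (M%:R / 2 : R))%:~R :> R.
Proof.
apply: mulr_ge0; first by rewrite ler0n.
rewrite ler0z ceil_ge0; apply: (lt_le_trans (y := 0)); first by rewrite ltrN10.
by apply: divr_ge0; rewrite ler0n.
Qed.

Lemma rhs_le0 (R : realType) (d : nat) (a : R) : a <= 0 -> 1 / (4 * d%:R * a) <= 0.
Proof.
move=> a0; rewrite div1r invr_le0; apply: mulr_ge0_le0 => //.
by apply: mulr_ge0; rewrite ?ler0n.
Qed.

Lemma via_vertex (R : realType) (T : finType) (e : rel T) (sigma : T -> T -> R) K lambda f x0 z M :
  simple_graph e -> connected_graph e -> is_sign e sigma -> CD_inf e sigma K ->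
  (forall z, - slap e sigma f z = lambda * f z) -> 0 < lambda -> 0 < 2 * lambda - K ->
  f x0 = 1 -> (forall z, `|f z| <= 1) -> (diam e <= M)%N ->
  (forall p, path e x0 p -> last x0 p = z -> wsg (sigs e sigma) x0 p * f z <= 0) ->
  1 / (4 * (maxdeg e)%:R * (2 * lambda - K)) <= M%:R * (Num.ceil (M%:R / 2 : R))%:~R.
Proof.
move=> sg hc hs hcd eig lpos apos fx0 hf dM hz.
have [p [pp lp up sp]] := dist_path (hc x0 z).
have := core sg hs hcd eig lpos apos fx0 hf pp up; rewrite lp => /(_ (hz p pp lp)) h.
apply: (final_bound h).
exact: leq_trans sp (leq_trans (dist_le_diam e x0 z) dM).
Qed.

Lemma part1 (R : realType) (T : finType) (e : rel T) (sigma : T -> T -> R) K lambda f x0 :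
  simple_graph e -> connected_graph e -> is_sign e sigma -> CD_inf e sigma K ->
  (forall z, - slap e sigma f z = lambda * f z) -> 0 < lambda -> 0 < 2 * lambda - K ->
  (0 < deg e x0)%N ->
  f x0 = 1 -> (forall z, `|f z| <= 1) ->
  1 / (4 * (maxdeg e)%:R * (2 * lambda - K)) <=
    (diam e).+1%:R * (Num.ceil ((diam e).+1%:R / 2 : R))%:~R.
Proof.
move=> sg hc hs hcd eig lpos apos dpos fx0 hf.
have [a [b [eab hab]]] : exists a b, e a b /\ sigma a b * f a * f b <= 0.
  case: (boolP [exists a, exists b, e a b && (sigma a b * f a * f b <= 0)]).
    by move=> /existsP [a /existsP [b /andP [eab h]]]; exists a, b.
  move=> /existsPn hn.
  have hpos : forall a b, e a b -> 0 < sigma a b * f a * f b.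
    move=> a b eab; have := hn a; move=> /existsPn /(_ b).
    by rewrite eab /= -ltNge.
  pose tau z : R := if 0 <= f z then 1 else -1.
  have ht : forall x, tau x * tau x = 1.
    by move=> x; rewrite /tau; case: ifP; rewrite ?mulr1 ?mulrNN ?mulr1.
  have hst : forall a b, e a b -> sigma a b = tau a * tau b.
    move=> a b eab; have hp := hpos a b eab.
    case: (hs a b eab) => _ hsv.
    rewrite /tau; case: (lerP 0 (f a)) => ha; case: (lerP 0 (f b)) => hb;
      case: hsv => hsv; rewrite hsv in hp *; rewrite ?mulr1 ?mulN1r ?mulrN1 ?opprK //;
      exfalso; nra.
  have S := switch_sum sg hst ht eig (lt0r_neq0 lpos).
  have w0 : forall z, 0 <= (deg e z)%:R :> R by move=> z; rewrite ler0n.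
  have pos0 : 0 < (deg e x0)%:R * (tau x0 * f x0) :> R.
    by rewrite /tau fx0 ler01 !mul1r mulr1 ltr0n.
  have [z hz] := exists_neg (w := fun x => (deg e x)%:R) (g := fun x => tau x * f x) w0 pos0 S.
  have : 0 <= (deg e z)%:R * (tau z * f z).
    apply: mulr_ge0; first by rewrite ler0n.
    rewrite /tau; case: ifP => h; first by rewrite mul1r.
    by move/negbT: h; rewrite -ltNge mulN1r oppr_ge0 => /ltW.
  by rewrite leNgt hz.
have [x [y [exy hxy dxy]]] : exists x y, [/\ e x y, sigma x y * f x * f y <= 0 &
                                            (dist e x0 x <= dist e x0 y)%N].
  case: (leqP (dist e x0 a) (dist e x0 b)) => h; first by exists a, b.
  exists b, a; split; first by rewrite sg.1.
    by case: (hs a b eab) => <- _; rewrite mulrAC.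
  exact: ltnW.
have [p [pp lp up sp]] := dist_path (hc x0 x).
have sp' : size p = dist e x0 x.
  apply/eqP; rewrite eqn_leq sp /=.
  have := dist_le (walk_within pp) (uniq_size_lt up); by rewrite lp.
have dD := dist_le_diam e x0 x.
case: (lerP (wsg (sigs e sigma) x0 p * f x) 0) => gx.
  have := core sg hs hcd eig lpos apos fx0 hf pp up; rewrite lp => /(_ gx) h.
  apply: (final_bound h); rewrite sp'; exact: leqW.
have yn : y \notin x0 :: p.
  apply/negP => yin.
  set j := index y (x0 :: p).
  have jlt : (j <= size p)%N by move: yin; rewrite -index_mem -/j /= ltnS.
  have Ly : last x0 (take j p) = y by rewrite last_take_nth // nth_index.
  have ptk : path e x0 (take j p).
    by move: pp; rewrite -{1}(cat_take_drop j p) cat_path => /andP [].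
  have dj : (dist e x0 y <= j)%N.
    have := dist_le (walk_within ptk); rewrite Ly size_takel //; apply.
    exact: leq_ltn_trans jlt (uniq_size_lt up).
  have jeq : j = size p by apply/eqP; rewrite eqn_leq jlt /=; rewrite sp'; exact: leq_trans dxy dj.
  have : y = x.
    rewrite -lp -Ly jeq take_size //.
  by move=> yx; move: exy; rewrite yx (negbTE (sg.2 x)).
have pp' : path e x0 (rcons p y) by rewrite rcons_path pp lp exy.
have up' : uniq (x0 :: rcons p y) by rewrite -rcons_cons rcons_uniq yn up.
have gy : wsg (sigs e sigma) x0 (rcons p y) * f (last x0 (rcons p y)) <= 0.
  rewrite wsg_rcons last_rcons lp.
  have sxy : sigs e sigma x y = sigma x y by rewrite /sigs exy.
  rewrite sxy.
  set W := wsg (sigs e sigma) x0 p.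
  have W2 : W * W = 1 by apply: wsg_sq; apply: sigs_sq.
  have : (W * f x) * (W * sigma x y * f y) <= 0.
    have -> : (W * f x) * (W * sigma x y * f y) = (W * W) * (sigma x y * f x * f y) by ring.
    by rewrite W2 mul1r.
  rewrite pmulr_rle0 //.
have := core sg hs hcd eig lpos apos fx0 hf pp' up' gy => h.
apply: (final_bound h); rewrite size_rcons sp' ltnS; exact: dD.
Qed.

Unset Implicit Arguments.

Theorem corollary3p10 (R : realType) (T : finType) (e : rel T)
  (sigma : T -> T -> R) (K lambda : R) :
  simple_graph e -> connected_graph e -> is_sign e sigma ->
  CD_inf e sigma K ->
  first_nonzero_eigenvalue e sigma lambda ->
  ((diam e).+1%:R * (Num.ceil ((diam e).+1%:R / 2 : R))%:~R
     >= 1 / (4 * (maxdeg e)%:R * (2 * lambda - K)))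
  /\
  (not_simple_eigenvalue e sigma lambda \/ balanced e sigma ->
   (diam e)%:R * (Num.ceil ((diam e)%:R / 2 : R))%:~R
     >= 1 / (4 * (maxdeg e)%:R * (2 * lambda - K))).
Proof.
move=> sg hc hs hcd [lnz [f0 [ex0 eig0]] _].
case: (lerP (2 * lambda - K) 0) => ha.
  by split; [|move=> _]; apply: le_trans (rhs_le0 _ ha) (lhs_ge0 _ _).
have [f [x0 [eig fx0 hf _]]] := normalize eig0 ex0.
have [lpos dpos] := lambda_pos hs eig fx0 hf lnz.
split; first exact: (part1 sg hc hs hcd eig lpos ha dpos fx0 hf).
case.
- move=> [g1 [g2 [e1 [e2 ind]]]].
  have [hh [ehh nzh zh]] : exists hh : T -> R,
      [/\ (forall z, - slap e sigma hh z = lambda * hh z), (exists x, hh x != 0) & hh x0 = 0].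
    case: (boolP ((g1 x0 == 0) && (g2 x0 == 0))) => [/andP [/eqP z1 /eqP z2] | nz].
      exists g1; split => //.
      case: (boolP [exists x, g1 x != 0]) => [/existsP [x hx]|/existsPn hn]; first by exists x.
      have := ind 1 0; case => [x|]; last by move=> /eqP; rewrite oner_eq0.
      by have := hn x; rewrite negbK => /eqP ->; rewrite mulr0 mul0r addr0.
    exists (fun z => g2 x0 * g1 z + (- g1 x0) * g2 z); split.
    + move=> z; rewrite slap_lin2.
      have -> : slap e sigma g1 z = - (lambda * g1 z) by rewrite -e1 opprK.
      have -> : slap e sigma g2 z = - (lambda * g2 z) by rewrite -e2 opprK.
      ring.
    + case: (boolP [exists x, g2 x0 * g1 x + (- g1 x0) * g2 x != 0]) =>
          [/existsP [x hx]|/existsPn hn]; first by exists x.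
      have [] := ind (g2 x0) (- g1 x0).
        by move=> x; have := hn x; rewrite negbK => /eqP.
      move=> h1 /eqP; rewrite oppr_eq0 => /eqP h2.
      by move: nz; rewrite h1 h2 eqxx.
    + by ring.
  have [f' [x1 [eig' fx1 hf' zf']]] := normalize ehh nzh.
  apply: (via_vertex (z := x0) sg hc hs hcd eig' lpos ha fx1 hf' (leqnn _)).
  by move=> p _ _; rewrite zf' // mulr0.
- move=> hb.
  have [tau [ht hst]] := balanced_switch x0 sg hc hs hb.
  have S := switch_sum sg hst ht eig lnz.
  have w0 : forall z, 0 <= (deg e z)%:R :> R by move=> z; rewrite ler0n.
  have pos0 : 0 < (deg e x0)%:R * (tau x0 * (tau x0 * f x0)) :> R.
    by rewrite fx0 mulr1 ht mulr1 ltr0n.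
  have S' : \sum_z (deg e z)%:R * (tau x0 * (tau z * f z)) = 0.
    transitivity (tau x0 * \sum_x (deg e x)%:R * (tau x * f x)); last by rewrite S mulr0.
    rewrite mulr_sumr; apply: eq_bigr => z _; ring.
  have [z hz] := exists_neg (w := fun x => (deg e x)%:R)
                   (g := fun x => tau x0 * (tau x * f x)) w0 pos0 S'.
  have gz : tau x0 * (tau z * f z) <= 0.
    rewrite leNgt; apply/negP => gpos.
    by move: hz; rewrite ltNge mulr_ge0 // ltW.
  apply: (via_vertex (z := z) sg hc hs hcd eig lpos ha fx0 hf (leqnn _)).
  move=> p pp lp.
  rewrite (wsg_tau (tau := tau) _ ht pp) ?lp; first by rewrite -mulrA.
  by move=> a b eab; rewrite /sigs eab hst.
Qed.
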